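(* (1) If $L\subseteq A^*$ is accepted by a nondeterministic finite automaton having depth $m$, then ${\downarrow}L$ and ${\downarrow}_<L$ are $\ell$-PT for $\ell=2m+2$. (2) The same holds if $L$ is accepted by a context-free grammar in quadratic normal form with $N$ nonterminals, with $\ell=4\cdot 3^{N-1}+2$.
   Context: The depth of an automaton is the maximum length of a simple (non-repeating) path from an initial state to some final state. A context-free grammar is in quadratic normal form if every production has one of the forms $X\to YZ$, $X\to Y$, $X\to a$ or $X\to\epsilon$, where $X,Y,Z$ are nonterminals and $a$ is a terminal letter. $u\sqsubseteq v$ (subword) means $u=a_1\cdots a_n$ with letters $a_i$ and $v=v_0a_1v_1\cdots a_nv_n$; $u\sqsubset v$ means $u\sqsubseteq v$ and $u\ne v$. ${\downarrow}L=\{v~|~\exists u\in L: v\sqsubseteq u\}$, ${\downarrow}_<L=\{v~|~\exists u\in L: v\sqsubset u\}$. $u\sim_n v$ iff $u,v$ have the same subwords of length at most $n$; $L$ is $n$-PT if it is a union of $\sim_n$-classes. *)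

(* Defs.v *)
From mathcomp Require Import all_boot.
Set Implicit Arguments. Unset Strict Implicit. Unset Printing Implicit Defensive.

Definition lang (A : Type) := seq A -> Prop.

(* u ⊑ v (scattered subword) is mathcomp's [subseq u v]. *)

Definition dclosure (A : eqType) (L : lang A) : lang A :=
  fun v => exists u, L u /\ subseq v u.
Definition sdclosure (A : eqType) (L : lang A) : lang A :=
  fun v => exists u, L u /\ subseq v u /\ v != u.

Definition simn (A : eqType) (n : nat) (u v : seq A) : Prop :=
  forall w : seq A, size w <= n -> subseq w u = subseq w v.

Definition PT (A : eqType) (n : nat) (L : lang A) : Prop :=
  forall u v : seq A, simn n u v -> (L u <-> L v).

Record nfa (A : finType) := Nfa {
  nfa_state : finType;
  nfa_init : pred nfa_state;
  nfa_final : pred nfa_state;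
  nfa_trans : nfa_state -> A -> nfa_state -> bool }.

Fixpoint nfa_accept_from (A : finType) (M : nfa A) (q : nfa_state M) (w : seq A)
  : bool :=
  match w with
  | [::] => @nfa_final A M q
  | a :: w' => [exists q' : nfa_state M, @nfa_trans A M q a q' && nfa_accept_from q' w']
  end.

Definition nfa_lang (A : finType) (M : nfa A) : lang A :=
  fun w => exists2 q, @nfa_init A M q & nfa_accept_from q w.

Definition nfa_edge (A : finType) (M : nfa A) (p q : nfa_state M) : bool :=
  [exists a : A, @nfa_trans A M p a q].

(* A simple path from an initial state to a final state: the sequence of its
   states [q0 :: qs], pairwise distinct; its length is the number of edges,
   i.e. [size qs]. *)
Definition simple_acc_path (A : finType) (M : nfa A) (q0 : nfa_state M)
  (qs : seq (nfa_state M)) : bool :=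
  [&& @nfa_init A M q0, path (@nfa_edge A M) q0 qs,
      @nfa_final A M (last q0 qs) & uniq (q0 :: qs)].

Definition nfa_depth (A : finType) (M : nfa A) (m : nat) : Prop :=
  (exists q0 qs, @simple_acc_path A M q0 qs /\ size qs = m) /\
  (forall q0 qs, @simple_acc_path A M q0 qs -> size qs <= m).

Record qnf_grammar (A : finType) := Qnf {
  nonterm : finType;
  start : nonterm;
  prod_bin : nonterm -> nonterm -> nonterm -> bool;  (* X -> Y Z *)
  prod_unit : nonterm -> nonterm -> bool;            (* X -> Y *)
  prod_term : nonterm -> A -> bool;                  (* X -> a *)
  prod_eps : pred nonterm }.                         (* X -> eps *)

Inductive derives (A : finType) (G : qnf_grammar A) : nonterm G -> seq A -> Prop :=
  | der_bin X Y Z u v : @prod_bin A G X Y Z -> @derives A G Y u -> @derives A G Z v ->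
      @derives A G X (u ++ v)
  | der_unit X Y u : @prod_unit A G X Y -> @derives A G Y u -> @derives A G X u
  | der_term X a : @prod_term A G X a -> @derives A G X [:: a]
  | der_eps X : @prod_eps A G X -> @derives A G X [::].

Definition cfg_lang (A : finType) (G : qnf_grammar A) : lang A :=
  fun w => @derives A G (start G) w.

(* Main.v *)
Require Import Defs.
From mathcomp Require Import all_boot zify.
Set Implicit Arguments. Unset Strict Implicit. Unset Printing Implicit Defensive.

Inductive atom (A : eqType) := Star of pred A | Opt of A.
Arguments Star {A}. Arguments Opt {A}.

Fixpoint dropstar (A : eqType) (B : pred A) (s : seq A) : seq A :=
  if s is c :: s' then (if B c then dropstar B s' else s) else [::].

Fixpoint gres (A : eqType) (I : seq (atom A)) (v : seq A) : seq A :=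
  match I with
  | [::] => v
  | Star B :: I' => gres I' (dropstar B v)
  | Opt a :: I' => match v with
                  | c :: v' => if c == a then gres I' v' else gres I' v
                  | [::] => gres I' [::] end
  end.
Definition gmem (A : eqType) (I : seq (atom A)) v := gres I v == [::].

Lemma subseq_cons2 (A : eqType) (c : A) s t : subseq (c :: s) (c :: t) = subseq s t.
Proof. by rewrite /= eqxx. Qed.

Lemma subseq_consE (A : eqType) (x c : A) s t : x != c ->
  subseq (x :: s) (c :: t) = subseq (x :: s) t.
Proof. by move=> /negbTE H; rewrite /= H. Qed.

Lemma dropstar_sub (A : eqType) (B : pred A) s : subseq (dropstar B s) s.
Proof.
elim: s => //= c s IH; case: (B c); last exact: (subseq_refl (c :: s)).
exact: subseq_trans IH (subseq_cons _ _).
Qed.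

Lemma dropstar_mono (A : eqType) (B : pred A) w v :
  subseq w v -> subseq (dropstar B w) (dropstar B v).
Proof.
elim: v w => [|c v IH] w.
  by rewrite subseq0 => /eqP ->.
case: w => [|x w]; first by move=> _; exact: sub0seq.
move=> H /=; case Bc: (B c).
  case: (eqVneq x c) H => [-> | ne] H.
    rewrite Bc; apply: IH; by rewrite subseq_cons2 in H.
  rewrite subseq_consE // in H; exact: (IH (x :: w)).
exact: subseq_trans (dropstar_sub _ _) H.
Qed.

Lemma dropstar_split (A : eqType) (B : pred A) s :
  exists t, s = t ++ dropstar B s /\ all B t.
Proof.
elim: s => [|c s [t [E Ht]]]; first by exists [::].
rewrite /=; case Bc: (B c).
  by exists (c :: t); rewrite /= Bc Ht -E.
by exists [::].
Qed.

Lemma dropstar_all (A : eqType) (B : pred A) t s :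
  all B t -> dropstar B (t ++ s) = dropstar B s.
Proof. by elim: t => //= c t IH /andP [-> /IH]. Qed.

Lemma dropstar_nil (A : eqType) (B : pred A) s : (dropstar B s == [::]) = all B s.
Proof. by elim: s => //= c s IH; case: (B c). Qed.

Lemma dropstar_cat (A : eqType) (B : pred A) x y :
  subseq (dropstar B (x ++ y)) (dropstar B x ++ y).
Proof.
elim: x => [|c x IH] /=; first exact: dropstar_sub.
by case: (B c).
Qed.

Lemma gres_mono (A : eqType) (I : seq (atom A)) w v :
  subseq w v -> subseq (gres I w) (gres I v).
Proof.
elim: I w v => [|[B|a] I IH] w v //= H.
  by apply: IH; apply: dropstar_mono.
case: v H => [|c v].
  by rewrite subseq0 => /eqP ->.
case: w => [|x w] H.
  case: (c == a); apply: IH; exact: sub0seq.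
case: (eqVneq c a) => [ca | na].
  case: (eqVneq x a) => [xa | xna].
    by apply: IH; move: H; rewrite xa ca subseq_cons2.
  by apply: IH; move: H; rewrite ca subseq_consE.
case: (eqVneq x a) => [xa | xna].
  by apply: IH; apply: subseq_trans H; apply: subseq_cons.
exact: IH.
Qed.

Lemma gmem_mono (A : eqType) (I : seq (atom A)) w v :
  subseq w v -> gmem I v -> gmem I w.
Proof.
move=> H /eqP E; have := gres_mono I H; rewrite E subseq0; exact.
Qed.

Lemma gres_cat (A : eqType) (I1 I2 : seq (atom A)) v :
  gres (I1 ++ I2) v = gres I2 (gres I1 v).
Proof.
elim: I1 v => [|[B|a] I1 IH] v //=; case: v => [|c v]; rewrite ?IH //.
by case: (c == a).
Qed.

Lemma gres_opt (A : eqType) (I : seq (atom A)) a v :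
  subseq (gres (Opt a :: I) v) (gres I v).
Proof.
case: v => [|c v] /=; first exact: subseq_refl.
case: (c == a); last exact: subseq_refl.
apply: gres_mono; exact: subseq_cons.
Qed.

Lemma gres_star (A : eqType) (I : seq (atom A)) B v :
  subseq (gres (Star B :: I) v) (gres I v).
Proof. apply: gres_mono; exact: dropstar_sub. Qed.

Lemma gmem_opt_lift (A : eqType) (I : seq (atom A)) a v :
  gmem I v -> gmem (Opt a :: I) v.
Proof. move=> /eqP E; have := gres_opt I a v; by rewrite E subseq0. Qed.

Lemma gmem_star_lift (A : eqType) (I : seq (atom A)) B v :
  gmem I v -> gmem (Star B :: I) v.
Proof. move=> /eqP E; have := gres_star I B v; by rewrite E subseq0. Qed.

Lemma gres_app (A : eqType) (I : seq (atom A)) x y :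
  subseq (gres I (x ++ y)) (gres I x ++ y).
Proof.
elim: I x y => [|[B|a] I IH] x y /=; first exact: subseq_refl.
  apply: subseq_trans (IH _ _); apply: gres_mono; exact: dropstar_cat.
case: x => [|c x] /=.
  case: y => [|d y] /=; first by rewrite cats0 subseq_refl.
  case: (d == a); last exact: (IH [::] (d :: y)).
  apply: subseq_trans (IH [::] y) _; apply: cat_subseq; first exact: subseq_refl.
  exact: subseq_cons.
case: (c == a); [exact: IH | exact: (IH (c :: x))].
Qed.

Lemma gmem_cat (A : eqType) (I1 I2 : seq (atom A)) x1 x2 :
  gmem I1 x1 -> gmem I2 x2 -> gmem (I1 ++ I2) (x1 ++ x2).
Proof.
move=> /eqP E1 H2; rewrite /gmem gres_cat; apply/eqP.
have := gres_app I1 x1 x2; rewrite E1 /= => Hs.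
by have /eqP := gmem_mono Hs H2.
Qed.

Lemma gres_prefix (A : eqType) (I : seq (atom A)) y :
  exists p, y = p ++ gres I y /\ gmem I p.
Proof.
elim: I y => [|[B|a] I IH] y /=; first by exists [::].
  have [t [Et Ht]] := dropstar_split B y.
  have [p [Ep Hp]] := IH (dropstar B y).
  exists (t ++ p); split; first by rewrite -catA -Ep.
  by rewrite /gmem /= dropstar_all //; apply: gmem_mono Hp; apply: dropstar_sub.
case: y => [|c y].
  have [p [Ep Hp]] := IH [::]; exists p; split => //; exact: gmem_opt_lift.
case: (eqVneq c a) => [ca | na].
  have [p [Ep Hp]] := IH y; exists (a :: p); split; first by rewrite ca /= -Ep.
  by rewrite /gmem /= eqxx.
have [p [Ep Hp]] := IH (c :: y); exists p; split => //; exact: gmem_opt_lift.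
Qed.

Lemma gmem_split (A : eqType) (I1 I2 : seq (atom A)) y :
  gmem (I1 ++ I2) y -> exists y1 y2, [/\ y = y1 ++ y2, gmem I1 y1 & gmem I2 y2].
Proof.
move=> H; have [p [Ep Hp]] := gres_prefix I1 y.
exists p, (gres I1 y); split => //; by rewrite /gmem -gres_cat.
Qed.

Lemma gmem_star1 (A : eqType) (B : pred A) y : gmem [:: Star B] y = all B y.
Proof. by rewrite /gmem /= dropstar_nil. Qed.

Lemma gmem_opt1 (A : eqType) (a : A) y : gmem [:: Opt a] y -> subseq y [:: a].
Proof.
case: y => [|c y]; first by move=> _; exact: sub0seq.
rewrite /gmem /=.
by case: (eqVneq c a).
Qed.

Lemma gmem_optseq (A : eqType) (x y : seq A) : gmem (map Opt x) y -> subseq y x.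
Proof.
elim: x y => [|a x IH] y; first by rewrite /gmem /= => /eqP ->.
move=> /(@gmem_split _ [:: Opt a]) [y1 [y2 [-> H1 H2]]].
rewrite -cat1s; apply: cat_subseq; [exact: gmem_opt1 | exact: IH].
Qed.

Lemma gmem_optseq_self (A : eqType) (x : seq A) : gmem (map Opt x) x.
Proof. elim: x => //= a x IH; by rewrite /gmem /= eqxx. Qed.

Lemma witness (A : eqType) (I : seq (atom A)) v :
  ~~ gmem I v -> exists w, [/\ subseq w v, size w <= (size I).+1 & ~~ gmem I w].
Proof.
elim: I v => [|[B|a] I IH] v.
  case: v => [|c v] //= _; exists [:: c]; split => //.
  exact: (prefix_subseq [:: c] v).
- rewrite /gmem /= => /IH [w' [H1 H2 H3]].
  case E: (dropstar B v) H1 => [|c rest] H1.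
    move: H1; rewrite subseq0 => /eqP Ew; subst w'.
    exists [::]; split; [exact: sub0seq | by [] | exact: H3].
  have nBc : ~~ B c.
    move: E; elim: (v) => //= d s IHs; case Bd: (B d) => //; by case=> <-; rewrite Bd.
  have Hsub : subseq (c :: rest) v by rewrite -E; apply: dropstar_sub.
  case: w' H1 H2 H3 => [|x s1] H1 H2 H3.
    exists [::]; split; [exact: sub0seq | by [] | exact: H3].
  case: (eqVneq x c) => [xc | xnc].
    subst x; exists (c :: s1); split; first exact: subseq_trans H1 Hsub.
    + move: H2 => /= H2; lia.
    + by rewrite /gmem /= (negbTE nBc).
  exists (c :: x :: s1); split.
  + apply: subseq_trans Hsub; rewrite subseq_cons2; by rewrite subseq_consE in H1.
  + move: H2 => /= H2; lia.
  + rewrite /gmem /= (negbTE nBc); apply: contra H3 => H; exact: gmem_mono (subseq_cons _ _) H.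
- case: v => [|b v].
    rewrite /gmem /= => H; exists [::]; split => //.
  move=> Hn.
  have : (if b == a then ~~ gmem I v else ~~ gmem I (b :: v)).
    by move: Hn; rewrite /gmem /=; case: (b == a).
  case: (eqVneq b a) => [ba | bna].
    move=> /IH [w' [H1 H2 H3]]; exists (a :: w'); split.
    + by rewrite ba subseq_cons2.
    + move: H2 => /= H2; lia.
    + by rewrite /gmem /= eqxx.
  move=> /IH [w' [H1 H2 H3]].
  case: w' H1 H2 H3 => [|x s1] H1 H2 H3.
    exists [::]; split; [exact: sub0seq | by [] | exact: H3].
  case: (eqVneq x a) => [xa | xna].
    subst x; exists (b :: a :: s1); split.
    + rewrite subseq_cons2; rewrite subseq_consE in H1 => //; by rewrite eq_sym.
    + move: H2 => /= H2; lia.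
    + rewrite /gmem /= (negbTE bna); apply: contra H3 => H; exact: gmem_mono (subseq_cons _ _) H.
  exists (x :: s1); split; [exact: H1 | move: H2 => /= H2; lia | ].
  by rewrite /gmem /= (negbTE xna).
Qed.

Lemma simn_sym (A : eqType) n (u v : seq A) : simn n u v -> simn n v u.
Proof. by move=> H w Hw; rewrite H. Qed.

Lemma gmem_PT (A : eqType) (I : seq (atom A)) n u v :
  gmem I u -> simn n u v -> size I < n -> gmem I v.
Proof.
move=> Hu Hs Hn; apply/negPn/negP => /witness [w [H1 H2 H3]].
have Hwu : subseq w u by rewrite Hs //; apply: leq_trans H2 Hn.
by move: H3; rewrite (gmem_mono Hwu Hu).
Qed.

Lemma PT_ideals (A : eqType) n (L : lang A) :
  (forall v, L v -> exists I, [/\ size I < n, gmem I v & forall y, gmem I y -> L y]) ->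
  PT n L.
Proof.
move=> H u v Huv; split=> Hx.
  have [I [H1 H2 H3]] := H _ Hx; apply: H3; exact: gmem_PT H2 Huv H1.
have [I [H1 H2 H3]] := H _ Hx; apply: H3; exact: gmem_PT H2 (simn_sym Huv) H1.
Qed.

Lemma del_letter (A : eqType) (v u : seq A) : subseq v u -> v != u ->
  exists u', [/\ subseq v u', subseq u' u & size u' < size u].
Proof.
elim: u v => [|c u IH] v.
  by rewrite subseq0 => /eqP ->.
case: v => [|x v] H Hne.
  exists u; split => //; [exact: sub0seq | exact: subseq_cons].
case: (eqVneq x c) => [xc | xnc].
  subst x; rewrite subseq_cons2 in H.
  have Hne' : v != u by apply: contra Hne => /eqP ->.
  have [u' [H1 H2 H3]] := IH _ H Hne'.
  by exists (c :: u'); rewrite !subseq_cons2.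
exists u; split => //; last exact: subseq_cons.
by rewrite subseq_consE in H.
Qed.

Fixpoint wk (A : finType) (M : nfa A) (p : nfa_state M) (s : seq (A * nfa_state M)) : bool :=
  if s is (a, q) :: s' then nfa_trans p a q && wk q s' else true.

Definition lastst (A : finType) (M : nfa A) (p : nfa_state M) (s : seq (A * nfa_state M)) :=
  last p (map snd s).

Lemma lastst_cat (A : finType) (M : nfa A) (p : nfa_state M) s1 s2 :
  lastst p (s1 ++ s2) = lastst (lastst p s1) s2.
Proof. by rewrite /lastst map_cat last_cat. Qed.

Lemma wk_cat (A : finType) (M : nfa A) (p : nfa_state M) s1 s2 :
  wk p (s1 ++ s2) = wk p s1 && wk (lastst p s1) s2.
Proof.
elim: s1 p => [|[a q] s1 IH] p //=; by rewrite IH andbA.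
Qed.

Lemma accept_wk (A : finType) (M : nfa A) (q : nfa_state M) x :
  nfa_accept_from q x ->
  exists s, [/\ wk q s, map fst s = x & nfa_final (lastst q s)].
Proof.
elim: x q => [|a x IH] q /=; first by move=> H; exists [::].
move=> /existsP [q' /andP [Ht /IH [s [H1 H2 H3]]]].
by exists ((a, q') :: s); rewrite /= Ht H1 H2.
Qed.

Lemma wk_accept (A : finType) (M : nfa A) (q : nfa_state M) s :
  wk q s -> nfa_final (lastst q s) -> nfa_accept_from q (map fst s).
Proof.
elim: s q => [|[a q'] s IH] q //= /andP [Ht Hw] Hf.
apply/existsP; exists q'; rewrite Ht; exact: IH.
Qed.

Lemma wk_path (A : finType) (M : nfa A) (p : nfa_state M) s :
  wk p s -> path (@nfa_edge A M) p (map snd s).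
Proof.
elim: s p => [|[a q] s IH] p //= /andP [Ht Hw].
rewrite IH // andbT; apply/existsP; by exists a.
Qed.

Lemma wk_connect (A : finType) (M : nfa A) (p : nfa_state M) s :
  wk p s -> connect (@nfa_edge A M) p (lastst p s).
Proof. move=> /wk_path H; apply/connectP; by exists (map snd s). Qed.

Lemma connect_wk (A : finType) (M : nfa A) (p q : nfa_state M) :
  connect (@nfa_edge A M) p q -> exists s, wk p s /\ lastst p s = q.
Proof.
move=> /connectP [qs Hp ->]; elim: qs p Hp => [|q1 qs IH] p /=.
  by move=> _; exists [::].
move=> /andP [/existsP [a Ha] /IH [s [H1 H2]]].
by exists ((a, q1) :: s); split; [rewrite /= Ha H1 | exact: H2].
Qed.

Definition loopB (A : finType) (M : nfa A) (p : nfa_state M) : pred A :=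
  fun b => [exists q : nfa_state M, [exists q' : nfa_state M,
    [&& connect (@nfa_edge A M) p q, nfa_trans q b q' & connect (@nfa_edge A M) q' p]]].

Lemma loop_all (A : finType) (M : nfa A) (p : nfa_state M) s :
  wk p s -> lastst p s = p -> all (loopB p) (map fst s).
Proof.
move=> Hw Hl; apply/allP => b /mapP [[a q] Hin ->] /=.
move: Hw Hl; case/splitPr: Hin => s1 s2.
rewrite wk_cat lastst_cat => /andP [H1 H2'] Hl.
move: H2' => /= /andP [Ht H2].
have Hl' : lastst q s2 = p by exact: Hl.
apply/existsP; exists (lastst p s1); apply/existsP; exists q.
rewrite wk_connect // Ht /=.
by have := wk_connect H2; rewrite Hl'.
Qed.

Lemma loop_realize (A : finType) (M : nfa A) (p : nfa_state M) y :
  all (loopB p) y ->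
  exists s, [/\ wk p s, lastst p s = p & subseq y (map fst s)].
Proof.
elim: y => [|b y IH] /=; first by exists [::].
move=> /andP [/existsP [q /existsP [q' /and3P [C1 Ht C2]]] /IH [s3 [H31 H32 H33]]].
have [s1 [H11 H12]] := connect_wk C1.
have [s2 [H21 H22]] := connect_wk C2.
exists (s1 ++ (b, q') :: s2 ++ s3); split.
- by rewrite wk_cat H11 H12 /= Ht wk_cat H21 H22 H31.
- rewrite lastst_cat H12; change (lastst q' (s2 ++ s3) = p); by rewrite lastst_cat H22 H32.
- rewrite map_cat /=; apply: subseq_trans (suffix_subseq _ _).
  rewrite subseq_cons2 map_cat; apply: subseq_trans H33 (suffix_subseq _ _).
Qed.

Fixpoint Iof (A : finType) (M : nfa A) (p : nfa_state M) (st : seq (A * nfa_state M))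
  : seq (atom A) :=
  Star (loopB p) :: (if st is (a, q) :: st' then Opt a :: Iof q st' else [::]).

Lemma size_Iof (A : finType) (M : nfa A) (p : nfa_state M) st :
  size (Iof p st) = (size st).*2.+1.
Proof. elim: st p => [|[a q] st IH] p //=; by rewrite IH. Qed.

Lemma complete (A : finType) (M : nfa A) n : forall (p : nfa_state M) s,
  size s < n -> wk p s ->
  exists st, [/\ wk p st, uniq (p :: map snd st), lastst p st = lastst p s /\
    {subset map snd st <= p :: map snd s}, gmem (Iof p st) (map fst s)
    & st = s \/ exists t b, t \in p :: map snd st /\ loopB t b].
Proof.
elim: n => [|n IHn] p s //.
move=> Hs Hw.
case: (boolP (p \in map snd s)) => Hp.
  have [[a q] Hin Eq] := mapP Hp; rewrite /= in Eq; subst q.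
  move: Hs Hw; case/splitPr: Hin => s1 s2.
  rewrite -cat_rcons => Hs Hw.
  have Hl : lastst p (rcons s1 (a, p)) = p by rewrite /lastst map_rcons last_rcons.
  move: Hw; rewrite wk_cat Hl => /andP [Hw1 Hw2].
  have Hs2 : size s2 < n.
  { move: Hs; rewrite size_cat size_rcons addSn ltnS; apply: leq_ltn_trans; exact: leq_addl. }
  have [st [H1 H2 [H3 H4] H5 H6]] := IHn p s2 Hs2 Hw2.
  exists st; split => //; first split.
  - by rewrite H3 lastst_cat Hl.
  - move=> t /H4; rewrite !inE map_cat mem_cat => /orP [-> //|->]; by rewrite !orbT.
  - move: H5; rewrite map_cat; case: st {H1 H2 H3 H4 H6} => [|[b q] st];
      rewrite /gmem /= dropstar_all //; exact: loop_all.
  - right; exists p, a; split; first exact: mem_head.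
    have := loop_all Hw1 Hl; rewrite map_rcons all_rcons => /andP [] //.
case: s Hs Hw Hp => [|[a q] s'] Hs Hw Hp.
  exists [::]; split => //; last by left.
move: Hw => /= /andP [Ht Hw'].
have Hs' : size s' < n by move: Hs => /=; lia.
have [st [H1 H2 [H3 H4] H5 H6]] := IHn q s' Hs' Hw'.
exists ((a, q) :: st); split.
- by rewrite /= Ht.
- rewrite /= in H2 *; rewrite H2 andbT; apply/negP => /orP [Hq | Hin].
    by move: Hp; rewrite /= (eqP Hq) inE eqxx.
  by move: Hp; rewrite /= => /negP; apply; have := H4 _ Hin.
- split; first by [].
  move=> t; rewrite /= inE => /orP [/eqP -> | /H4 Ht']; first by rewrite !inE eqxx orbT.
  by rewrite inE Ht' orbT.
- apply: gmem_star_lift; by rewrite /gmem /= eqxx.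
- case: H6 => [-> | [t [b [Ht1 Ht2]]]]; first by left.
  right; exists t, b; split => //; by rewrite inE Ht1 orbT.
Qed.

Lemma sound (A : finType) (M : nfa A) st : forall (p : nfa_state M) y t z,
  wk p st -> t \in p :: map snd st -> all (loopB t) z -> gmem (Iof p st) y ->
  exists s, [/\ wk p s, lastst p s = lastst p st, subseq y (map fst s)
    & size y + size z <= size s].
Proof.
elim: st => [|[a q] st IH] p y t z Hw Ht Hz.
  rewrite [Iof _ _]/= gmem_star1 => Hy; move: Ht Hz; rewrite inE => /eqP -> Hz.
  have Hall : all (loopB p) (z ++ y) by rewrite all_cat Hz Hy.
  have [s [H1 H2 H3]] := loop_realize Hall.
  exists s; split => //; first exact: subseq_trans (suffix_subseq _ _) H3.
  have := size_subseq H3; rewrite size_cat size_map => HH; rewrite addnC; exact: HH.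
move: Hw => /andP [Htr Hw].
move=> /(@gmem_split _ [:: Star (loopB p)]) [y1 [y2 [-> Hy1 Hy2]]].
move: Hy2 => /(@gmem_split _ [:: Opt a]) [y21 [y22 [-> Hy21 Hy22]]].
rewrite gmem_star1 in Hy1.
have Hsz : size y21 <= 1 by have := size_subseq (gmem_opt1 Hy21).
have Hsub21 := gmem_opt1 Hy21.
have assemble : forall (s1 s2 : seq (A * nfa_state M)) (z1 z2 : seq A), wk p s1 -> lastst p s1 = p ->
    subseq y1 (map fst s1) -> size y1 + size z1 <= size s1 ->
    wk q s2 -> lastst q s2 = lastst q st -> subseq y22 (map fst s2) ->
    size y22 + size z2 <= size s2 -> size z <= size z1 + size z2 ->
    exists s, [/\ wk p s, lastst p s = lastst p ((a, q) :: st),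
      subseq (y1 ++ y21 ++ y22) (map fst s) & size (y1 ++ y21 ++ y22) + size z <= size s].
  move=> s1 s2 z1 z2 W1 L1 S1 Z1 W2 L2 S2 Z2 Zs.
  exists (s1 ++ (a, q) :: s2); split.
  - by rewrite wk_cat W1 L1 /= Htr W2.
  - rewrite lastst_cat L1; change (lastst q s2 = lastst q st); exact: L2.
  - rewrite map_cat; apply: cat_subseq; first exact: S1.
    change (subseq (y21 ++ y22) ([:: a] ++ map fst s2)); exact: cat_subseq Hsub21 S2.
  - rewrite !size_cat /=; move: Z1 Z2 Zs Hsz.
    set k1 := size y1; set k2 := size y21; set k3 := size y22; set k4 := size z.
    set k5 := size z1; set k6 := size z2; set k7 := size s1; set k8 := size s2. lia.
move: Ht; rewrite inE => /orP [/eqP Htp | Ht].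
  subst t.
  have Hall : all (loopB p) (z ++ y1) by rewrite all_cat Hz Hy1.
  have [s1 [H11 H12 H13]] := loop_realize Hall.
  have [s2 [H21 H22 H23 H24]] := IH q y22 q [::] Hw (mem_head _ _) isT Hy22.
  apply: (assemble s1 s2 z [::]) => //.
  - exact: subseq_trans (suffix_subseq _ _) H13.
  - have := size_subseq H13; rewrite size_cat size_map => HH; rewrite addnC; exact: HH.
  - by rewrite addn0.
have [s1 [H11 H12 H13]] := loop_realize Hy1.
have [s2 [H21 H22 H23 H24]] := IH q y22 t z Hw Ht Hz Hy22.
apply: (assemble s1 s2 [::] z) => //.
have := size_subseq H13; rewrite size_map addn0 //.
Qed.

Inductive dr (A : finType) (G : qnf_grammar A) (S : {set nonterm G}) :
  nonterm G -> seq A -> Prop :=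
  | dr_bin X Y Z u v : X \in S -> prod_bin X Y Z -> dr S Y u -> dr S Z v -> dr S X (u ++ v)
  | dr_unit X Y u : X \in S -> prod_unit X Y -> dr S Y u -> dr S X u
  | dr_term X a : X \in S -> prod_term X a -> dr S X [:: a]
  | dr_eps X : X \in S -> prod_eps X -> dr S X [::].

Lemma der_dr (A : finType) (G : qnf_grammar A) X x : derives X x -> dr [set: nonterm G] X x.
Proof.
elim=> {X x}.
- move=> X Y Z u v H _ H1 _ H2; exact: dr_bin (in_setT _) H H1 H2.
- move=> X Y u H _ H1; exact: dr_unit (in_setT _) H H1.
- move=> X a H; exact: dr_term (in_setT _) H.
- move=> X H; exact: dr_eps (in_setT _) H.
Qed.

Lemma dr_der (A : finType) (G : qnf_grammar A) S (X : nonterm G) x : dr S X x -> derives X x.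
Proof.
elim=> {X x}.
- move=> X Y Z u v _ H _ H1 _ H2; exact: der_bin H H1 H2.
- move=> X Y u _ H _ H1; exact: der_unit H H1.
- move=> X a _ H; exact: der_term H.
- move=> X _ H; exact: der_eps H.
Qed.

Lemma dr_mem (A : finType) (G : qnf_grammar A) S (X : nonterm G) x : dr S X x -> X \in S.
Proof. by case. Qed.

Inductive derctx (A : finType) (G : qnf_grammar A) : nonterm G -> nonterm G -> seq A -> seq A -> Prop :=
  | cx_refl X : derctx X X [::] [::]
  | cx_binL X Y Z T u w v : prod_bin X Y Z -> derctx Y T u w -> derives Z v ->
      derctx X T u (w ++ v)
  | cx_binR X Y Z T u w v : prod_bin X Y Z -> derives Y v -> derctx Z T u w ->
      derctx X T (v ++ u) w
  | cx_unit X Y T u w : prod_unit X Y -> derctx Y T u w -> derctx X T u w.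

Lemma cx_plug (A : finType) (G : qnf_grammar A) (X T : nonterm G) u w x :
  derctx X T u w -> derives T x -> derives X (u ++ x ++ w).
Proof.
move=> H; elim: H x => {X T u w}.
- by move=> X x Hx; rewrite cats0.
- move=> X Y Z T u w v Hp _ IH Hv x Hx.
  rewrite !catA -(catA u x w); have := der_bin Hp (IH x Hx) Hv; by rewrite -!catA.
- move=> X Y Z T u w v Hp Hv _ IH x Hx.
  have := der_bin Hp Hv (IH x Hx); by rewrite !catA.
- move=> X Y T u w Hp _ IH x Hx; exact: der_unit Hp (IH x Hx).
Qed.

Lemma cx_comp (A : finType) (G : qnf_grammar A) (X T R : nonterm G) u w u' w' :
  derctx X T u w -> derctx T R u' w' -> derctx X R (u ++ u') (w' ++ w).
Proof.
move=> H; elim: H u' w' => {X T u w}.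
- by move=> X u' w' H; rewrite cats0.
- move=> X Y Z T u w v Hp _ IH Hv u' w' H.
  rewrite catA; exact: cx_binL Hp (IH _ _ H) Hv.
- move=> X Y Z T u w v Hp Hv _ IH u' w' H.
  rewrite -catA; exact: cx_binR Hp Hv (IH _ _ H).
- move=> X Y T u w Hp _ IH u' w' H; exact: cx_unit Hp (IH _ _ H).
Qed.

Definition pw (A : Type) k (u : seq A) := flatten (nseq k u).

Lemma pw_comm (A : Type) k (u : seq A) : pw k u ++ u = u ++ pw k u.
Proof. elim: k => [|k IH] /=; first by rewrite cats0. by rewrite -catA IH. Qed.

Lemma cx_pump (A : finType) (G : qnf_grammar A) (X : nonterm G) u w k :
  derctx X X u w -> derctx X X (pw k u) (pw k w).
Proof.
move=> H; elim: k => [|k IH]; first exact: cx_refl.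
have := cx_comp H IH; by rewrite /pw /= -/(pw k w) pw_comm.
Qed.

Lemma size_pw (A : Type) k (u : seq A) : size (pw k u) = k * size u.
Proof. elim: k => [|k IH] //=; by rewrite size_cat IH mulSn. Qed.

Lemma pw_mono (A : eqType) k k' (u : seq A) : k <= k' -> subseq (pw k u) (pw k' u).
Proof.
elim: k k' => [|k IH] k' H; first by rewrite /pw /= sub0seq.
case: k' H => [//|k'] H.
apply: (cat_subseq (subseq_refl u)); exact: IH.
Qed.

Lemma star_pw (A : eqType) (u y : seq A) : all (fun b => b \in u) y -> subseq y (pw (size y) u).
Proof.
elim: y => [|b y IH]; first by [].
rewrite /=.
move=> /andP [Hb /IH Hy]; rewrite -cat1s; apply: cat_subseq => //; by rewrite sub1seq.
Qed.

Definition root (A : finType) (G : qnf_grammar A) (S : {set nonterm G}) (X : nonterm G) x : Prop :=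
  (exists Y Z x1 x2, [/\ prod_bin X Y Z, dr (S :\ X) Y x1, dr (S :\ X) Z x2 & x = x1 ++ x2])
  \/ (exists Y, prod_unit X Y /\ dr (S :\ X) Y x)
  \/ (exists a, prod_term X a /\ x = [:: a])
  \/ (prod_eps X /\ x = [::]).

Lemma dec (A : finType) (G : qnf_grammar A) S (X Y : nonterm G) x :
  dr S Y x -> dr (S :\ X) Y x \/
    exists u w x', [/\ derctx Y X u w, x = u ++ x' ++ w & root S X x'].
Proof.
elim=> {Y x}.
- move=> Y Y1 Y2 x1 x2 HY Hp H1 IH1 H2 IH2.
  case: IH1 => [IH1 | [u [w [x' [C E R]]]]]; last first.
    right; exists u, (w ++ x2), x'; split.
    + exact: cx_binL Hp C (dr_der H2).
    + by rewrite E -!catA.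
    + exact: R.
  case: IH2 => [IH2 | [u [w [x' [C E R]]]]]; last first.
    right; exists (x1 ++ u), w, x'; split.
    + exact: cx_binR Hp (dr_der H1) C.
    + by rewrite E -!catA.
    + exact: R.
  case: (eqVneq Y X) => [EYX | NYX].
    subst Y; right; exists [::], [::], (x1 ++ x2); split.
    + exact: cx_refl.
    + by rewrite /= cats0.
    + left; by exists Y1, Y2, x1, x2.
  left; apply: dr_bin IH1 IH2 => //; by rewrite in_setD1 NYX HY.
- move=> Y Y1 x1 HY Hp H1 IH1.
  case: IH1 => [IH1 | [u [w [x' [C E R]]]]]; last first.
    right; exists u, w, x'; split => //; exact: cx_unit Hp C.
  case: (eqVneq Y X) => [EYX | NYX].
    subst Y; right; exists [::], [::], x1; split.
    + exact: cx_refl.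
    + by rewrite /= cats0.
    + right; left; by exists Y1.
  left; apply: dr_unit IH1 => //; by rewrite in_setD1 NYX HY.
- move=> Y a HY Hp.
  case: (eqVneq Y X) => [EYX | NYX].
    subst Y; right; exists [::], [::], [:: a]; split => //; first exact: cx_refl.
    right; right; left; by exists a.
  left; apply: dr_term Hp; by rewrite in_setD1 NYX HY.
- move=> Y HY Hp.
  case: (eqVneq Y X) => [EYX | NYX].
    subst Y; right; exists [::], [::], [::]; split => //; first exact: cx_refl.
    by right; right; right.
  left; apply: dr_eps Hp; by rewrite in_setD1 NYX HY.
Qed.

Fixpoint hh k := if k is k'.+1 then 2 * hh k' + 3 else 0.

Definition Weak (A : finType) (G : qnf_grammar A) (X : nonterm G) (I : seq (atom A)) :=
  forall y, gmem I y -> exists x2, derives X x2 /\ subseq y x2.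
Definition Strong (A : finType) (G : qnf_grammar A) (X : nonterm G) (I : seq (atom A)) :=
  forall y, gmem I y -> exists x2, [/\ derives X x2, subseq y x2 & size y < size x2].
Definition Exact (A : finType) (x : seq A) (I : seq (atom A)) :=
  (forall y, gmem I y -> subseq y x) /\ size x <= size I.

Lemma all_nil_mem (A : eqType) (y : seq A) : all (fun b => b \in [::]) y -> y = [::].
Proof. by case: y. Qed.

Lemma main_cfg (A : finType) (G : qnf_grammar A) k : forall (S : {set nonterm G}) (X : nonterm G) x,
  #|S| <= k -> dr S X x ->
  exists I : seq (atom A), [/\ size I <= hh k, gmem I x, Weak X I & Strong X I \/ Exact x I].
Proof.
elim: k => [|k IHk] S X x Hk H.
  have := dr_mem H; move: Hk; rewrite leqn0 => /eqP /cards0_eq ->; by rewrite in_set0.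
have HX := dr_mem H.
case: (dec X H) => [H' | [u [w [x' [C E R]]]]].
  by have := dr_mem H'; rewrite in_setD1 eqxx.
have HkS : #|S :\ X| <= k by move: Hk; rewrite (cardsD1 X S) HX add1n ltnS.
have [Ir [R1 R2 R3 R4]] : exists Ir : seq (atom A),
    [/\ size Ir <= 2 * hh k + 1, gmem Ir x', Weak X Ir & Strong X Ir \/ Exact x' Ir].
  case: R => [[Y [Z [x1 [x2 [Hp H1 H2 ->]]]]] | [[Y [Hp H1]] | [[a [Hp ->]] | [Hp ->]]]].
  - have [I1 [A1 A2 A3 A4]] := IHk _ _ _ HkS H1.
    have [I2 [B1 B2 B3 B4]] := IHk _ _ _ HkS H2.
    exists (I1 ++ I2); split.
    + rewrite size_cat; lia.
    + exact: gmem_cat.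
    + move=> y /gmem_split [y1 [y2 [-> G1 G2]]].
      have [z1 [D1 S1]] := A3 _ G1; have [z2 [D2 S2]] := B3 _ G2.
      exists (z1 ++ z2); split; [exact: der_bin Hp D1 D2 | exact: cat_subseq].
    + case: A4 => [St1 | [Ex1 Ez1]].
        left => y /gmem_split [y1 [y2 [-> G1 G2]]].
        have [z1 [D1 S1 Z1]] := St1 _ G1; have [z2 [D2 S2]] := B3 _ G2.
        exists (z1 ++ z2); split; [exact: der_bin Hp D1 D2 | exact: cat_subseq |].
        rewrite !size_cat; have := size_subseq S2.
        move: Z1; set k1 := size y1; set k2 := size y2; set k3 := size z1; set k4 := size z2; lia.
      case: B4 => [St2 | [Ex2 Ez2]].
        left => y /gmem_split [y1 [y2 [-> G1 G2]]].
        have [z1 [D1 S1]] := A3 _ G1; have [z2 [D2 S2 Z2]] := St2 _ G2.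
        exists (z1 ++ z2); split; [exact: der_bin Hp D1 D2 | exact: cat_subseq |].
        rewrite !size_cat; have := size_subseq S1.
        move: Z2; set k1 := size y1; set k2 := size y2; set k3 := size z1; set k4 := size z2; lia.
      right; split.
        move=> y /gmem_split [y1 [y2 [-> G1 G2]]]; apply: cat_subseq; [exact: Ex1 | exact: Ex2].
      rewrite !size_cat; move: Ez1 Ez2.
      set k1 := size x1; set k2 := size x2; set k3 := size I1; set k4 := size I2; lia.
  - have [I1 [A1 A2 A3 A4]] := IHk _ _ _ HkS H1.
    exists I1; split => //.
    + lia.
    + move=> y /A3 [z [D S1]]; exists z; split => //; exact: der_unit Hp D.
    + case: A4 => [St | Ex]; last by right.
      left => y /St [z [D S1 Z1]]; exists z; split => //; exact: der_unit Hp D.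
  - exists [:: Opt a]; split.
    + by rewrite /= addn1.
    + by rewrite /gmem /= eqxx.
    + move=> y /gmem_opt1 Hy; exists [:: a]; split => //; exact: der_term.
    + right; split => //; exact: gmem_opt1.
  - exists [::]; split.
    + by [].
    + by [].
    + move=> y; rewrite /gmem /= => /eqP ->; exists [::]; split => //; exact: der_eps.
    + right; split => // y; rewrite /gmem /= => /eqP ->; by [].
pose I := [:: Star (fun b => b \in u)] ++ (Ir ++ [:: Star (fun b => b \in w)]).
have pump : forall y, gmem I y -> exists x2,
    [/\ derives X x2, subseq y x2 & (u ++ w != [::]) -> size y < size x2].
  move=> y /gmem_split [y1 [yr [-> G1 /gmem_split [y2 [y3 [-> G2 G3]]]]]].
  rewrite gmem_star1 in G1; rewrite gmem_star1 in G3.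
  have [x2' [D2 S2]] := R3 y2 G2.
  pose K := size y1 + size y3 + 1.
  exists (pw K u ++ x2' ++ pw K w); split.
  - exact: cx_plug (cx_pump K C) D2.
  - apply: cat_subseq.
      apply: subseq_trans (star_pw G1) (pw_mono _ _); rewrite /K; lia.
    apply: cat_subseq S2 _.
    apply: subseq_trans (star_pw G3) (pw_mono _ _); rewrite /K; lia.
  - move=> Hne.
    have Hpos : 0 < size u + size w.
      by move: Hne; rewrite -size_cat lt0n size_eq0.
    have HK : K <= K * size u + K * size w by rewrite -mulnDr; apply: leq_pmulr.
    rewrite !size_cat !size_pw; have := size_subseq S2.
    move: HK; rewrite /K.
    set k1 := size y1; set k2 := size y2; set k3 := size y3; set k4 := size x2'.
    set k5 := size u; set k6 := size w.
    set k7 := (k1 + k3 + 1) * k5; set k8 := (k1 + k3 + 1) * k6; lia.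
exists I; split.
- rewrite /I !size_cat /=; lia.
- rewrite E; apply: gmem_cat.
    by rewrite gmem_star1; apply/allP.
  by apply: gmem_cat R2 _; rewrite gmem_star1; apply/allP.
- by move=> y /pump [x2 [D S1 _]]; exists x2.
case: (eqVneq (u ++ w) [::]) => [Enil | Hne]; last first.
  by left => y /pump [x2 [D S1 Z1]]; exists x2; split => //; apply: Z1.
have Hu : u = [::] by case: u Enil {C E I pump}.
have Hw : w = [::] by move: Enil; rewrite Hu; case: w {C E I pump}.
case: R4 => [St | [Ex Ez]].
  left => y /gmem_split [y1 [yr [-> G1 /gmem_split [y2 [y3 [-> G2 G3]]]]]].
  rewrite gmem_star1 Hu in G1; rewrite gmem_star1 Hw in G3.
  rewrite (all_nil_mem G1) (all_nil_mem G3) /= cats0; exact: St.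
right; split.
  move=> y /gmem_split [y1 [yr [-> G1 /gmem_split [y2 [y3 [-> G2 G3]]]]]].
  rewrite gmem_star1 Hu in G1; rewrite gmem_star1 Hw in G3.
  rewrite (all_nil_mem G1) (all_nil_mem G3) /= cats0 E Hu Hw /= cats0; exact: Ex.
rewrite E Hu Hw /= cats0 /I !size_cat /=; move: Ez.
set k1 := size x'; set k2 := size Ir; lia.
Qed.

Lemma nfa_part (A : finType) (M : nfa A) m : nfa_depth M m ->
  PT (2 * m + 2) (dclosure (nfa_lang M)) /\ PT (2 * m + 2) (sdclosure (nfa_lang M)).
Proof.
move=> [_ Hdep].
have key : forall (u : seq A), nfa_lang M u -> exists (q0 : nfa_state M) s st, [/\ nfa_init q0, wk q0 s, map fst s = u,
   nfa_final (lastst q0 s) /\ size st <= m &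
   [/\ wk q0 st, lastst q0 st = lastst q0 s, gmem (Iof q0 st) u
     & st = s \/ exists t b, t \in q0 :: map snd st /\ loopB t b]].
  move=> u; rewrite /nfa_lang => -[q0 Hi Hacc].
  have [s [Hw Hl Hf]] := accept_wk Hacc.
  have [st [H1 H2 [H3 H4] H5 H6]] := @complete A M (size s).+1 q0 s (ltnSn _) Hw.
  have Hsz : size st <= m.
    have := Hdep q0 (map snd st); rewrite size_map; apply.
    rewrite /simple_acc_path Hi (wk_path H1) H2 andbT /=.
    by have : lastst q0 st = lastst q0 s := H3; rewrite /lastst => ->.
  exists q0, s, st; split => //; rewrite -Hl //.
have Lsound : forall (q0 : nfa_state M) st y t z, nfa_init q0 -> wk q0 st -> nfa_final (lastst q0 st) ->
    t \in q0 :: map snd st -> all (loopB t) z -> gmem (Iof q0 st) y ->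
    exists x, [/\ nfa_lang M x, subseq y x & size y + size z <= size x].
  move=> q0 st y t z Hi Hw Hf Ht Hz Hy.
  have [s' [S1 S2 S3 S4]] := sound Hw Ht Hz Hy.
  exists (map fst s'); split => //; last by rewrite size_map.
  exists q0 => //; apply: wk_accept S1 _; by rewrite S2.
split; apply: PT_ideals => v.
  case=> u [Hu Hvu].
  have [q0 [s [st [Hi Hw Hl [Hf Hsz] [H1 H3 H5 H6]]]]] := key u Hu.
  exists (Iof q0 st); split.
  - rewrite size_Iof -mul2n; lia.
  - exact: gmem_mono Hvu H5.
  - move=> y Hy; have [x [X1 X2 _]] := Lsound q0 st y q0 [::] Hi H1 (ltac:(by rewrite H3))
      (mem_head _ _) isT Hy.
    by exists x.
case=> u [Hu [Hvu Hne]].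
have [q0 [s [st [Hi Hw Hl [Hf Hsz] [H1 H3 H5 H6]]]]] := key u Hu.
case: H6 => [Est | [t [b [Ht Hb]]]].
  subst st.
  have [u' [U1 U2 U3]] := del_letter Hvu Hne.
  exists (map Opt u'); split.
  - rewrite size_map; move: U3; rewrite -Hl size_map => U3.
    move: Hsz U3; set k1 := size u'; set k2 := size s; lia.
  - exact: gmem_mono U1 (gmem_optseq_self u').
  - move=> y /gmem_optseq Hy; exists u; split => //; split.
      exact: subseq_trans Hy U2.
    apply/eqP => E; move: (size_subseq Hy); rewrite E => HH.
    by move: (leq_trans U3 HH); rewrite ltnn.
exists (Iof q0 st); split.
- rewrite size_Iof -mul2n; lia.
- exact: gmem_mono Hvu H5.
- move=> y Hy; have Hbb : all (loopB t) [:: b] by rewrite /= Hb.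
  have [x [X1 X2 X3]] := Lsound q0 st y t [:: b] Hi H1 (ltac:(by rewrite H3)) Ht Hbb Hy.
  exists x; split => //; split => //.
  apply/eqP => E; move: X3; rewrite E /= addn1 ltnn //.
Qed.

Lemma hh_eq k : hh k + 3 = 3 * 2 ^ k.
Proof. elim: k => [|k IH] //=; rewrite expnS; lia. Qed.

Lemma pow_bound j : 3 * 2 ^ j.+1 <= 4 * 3 ^ j + 4.
Proof.
elim: j => [|j IH] //.
have H3 : 0 < 3 ^ j by rewrite expn_gt0.
move: IH; rewrite [2 ^ j.+2]expnS [3 ^ j.+1]expnS.
set a := 2 ^ j.+1; set b := 3 ^ j; lia.
Qed.

Lemma hh_bound N : 0 < N -> hh N < 4 * 3 ^ (N - 1) + 2.
Proof.
case: N => [//|j] _; have := hh_eq j.+1; have := pow_bound j.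
rewrite subn1 /=. set a := 2 ^ j.+1; set b := 3 ^ j; set c := hh j.+1. lia.
Qed.

Lemma cfg_part (A : finType) (G : qnf_grammar A) N : #|nonterm G| = N ->
  PT (4 * 3 ^ (N - 1) + 2) (dclosure (cfg_lang G)) /\
  PT (4 * 3 ^ (N - 1) + 2) (sdclosure (cfg_lang G)).
Proof.
move=> HN.
have Npos : 0 < N by rewrite -HN; apply/card_gt0P; exists (start G).
have Hb := hh_bound Npos.
have key : forall u, cfg_lang G u -> exists I : seq (atom A),
    [/\ size I <= hh N, gmem I u, Weak (start G) I & Strong (start G) I \/ Exact u I].
  move=> u Hu; apply: (@main_cfg A G N [set: nonterm G]); first by rewrite cardsT HN.
  exact: der_dr.
split; apply: PT_ideals => v.
  case=> u [Hu Hvu]; have [I [I1 I2 I3 I4]] := key u Hu.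
  exists I; split.
  - exact: leq_ltn_trans I1 Hb.
  - exact: gmem_mono Hvu I2.
  - move=> y /I3 [x2 [D S1]]; by exists x2.
case=> u [Hu [Hvu Hne]]; have [I [I1 I2 I3 I4]] := key u Hu.
case: I4 => [St | [Ex Ez]].
  exists I; split.
  - exact: leq_ltn_trans I1 Hb.
  - exact: gmem_mono Hvu I2.
  - move=> y /St [x2 [D S1 Z1]]; exists x2; split => //; split => //.
    by apply/eqP => E; move: Z1; rewrite E ltnn.
have [u' [U1 U2 U3]] := del_letter Hvu Hne.
exists (map Opt u'); split.
- rewrite size_map; apply: leq_trans Hb; apply: (leq_trans U3); apply: leq_trans Ez _.
  by apply: leq_trans I1 _.
- exact: gmem_mono U1 (gmem_optseq_self u').
- move=> y /gmem_optseq Hy; exists u; split => //; split.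
    exact: subseq_trans Hy U2.
  apply/eqP => E; move: (size_subseq Hy); rewrite E => HH.
  by move: (leq_trans U3 HH); rewrite ltnn.
Qed.

Theorem theorem14 (A : finType) :
  (forall (M : nfa A) (m : nat), nfa_depth M m ->
     PT (2 * m + 2) (dclosure (nfa_lang M)) /\
     PT (2 * m + 2) (sdclosure (nfa_lang M))) /\
  (forall (G : qnf_grammar A) (N : nat), #|nonterm G| = N ->
     PT (4 * 3 ^ (N - 1) + 2) (dclosure (cfg_lang G)) /\
     PT (4 * 3 ^ (N - 1) + 2) (sdclosure (cfg_lang G))).
Proof.
split; [exact: nfa_part | exact: cfg_part].
Qed.
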